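(* Let $G=(V,E)$ be an $n$-node graph, $\mathcal{C}$ a clustering of $G$ produced by $\mathbf{cluster}(G,e)$ for some integer $e\ge 1$, and $d,m$ positive integers. Let $H$ be the subgraph of $G$ on vertex set $V$ containing exactly the edges of $\mathbf{multspan}(G)$ and the edges of the paths in $\mathcal{S} = \mathbf{createStrips}(G, \mathcal{C}, d, m)$. Let $u,v\in V$ be such that $\rho_G(u,v)$ intersects exactly $k$ clean clusters and fewer than $\frac{k}{2}$ strips. Then $\delta_G(u,v) \ge \Omega\!\left(\frac{kd}{m}\right)$.
   Context: $G$ is unweighted and undirected; $\delta_G$ is shortest-path distance; the constant in $\Omega(\cdot)$ is absolute. For each pair of nodes $u,v$ a shortest path $\rho_G(u,v)$ is fixed, the choice being consistent and such that any two chosen shortest paths intersect on at most one (contiguous) subpath. $\mathbf{multspan}(G)$ is the subgraph produced by the greedy multiplicative spanner algorithm of Althöfer et al. with parameter $\log n$ ($O(n)$ edges, multiplicative stretch $2\log n -1$). The procedure $\mathbf{cluster}(G,e)$: initialize $\mathcal{C} = \emptyset$, unmark all nodes; while there is an unmarked node $u$ with at least $e-1$ unmarked neighbors, let $C$ be $u$ together with any $e-1$ of its unmarked neighbors, mark all nodes of $C$, add $C$ to $\mathcal{C}$; return $\mathcal{C}$. Elements of $\mathcal{C}$ are clusters. The procedure $\mathbf{createStrips}(G,\mathcal{C},d,m)$: initialize $\mathcal{S}=\emptyset$; while there exist $u,v \in V$ such that (1) $\delta_G(u,v) \le d$, (2) $\rho_G(u,v)$ intersects (shares a node with) at most $m$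 different paths in $\mathcal{S}$, and (3) $\rho_G(u,v)$ intersects exactly $m$ clusters that share no node with any path in $\mathcal{S}$, add $\rho_G(u,v)$ to $\mathcal{S}$; return $\mathcal{S}$. The paths in $\mathcal{S}$ are strips. A cluster is clean if it shares no node with any strip. A path intersects a strip or cluster if they share a node. *)

(* Defs.v *)
(* Graphs: a finite simple graph is a symmetric irreflexive
   relation [adj : rel V] on a finType V (n = #|V| nodes).  Paths are
   vertex sequences [seq V] (first vertex included). *)
From mathcomp Require Import all_boot.
Set Implicit Arguments. Unset Strict Implicit. Unset Printing Implicit Defensive.

Section Graph.
Variables (V : finType) (adj : rel V).

Definition walk_of_len (u v : V) (n : nat) : bool :=
  [exists t : n.-tuple V, path adj u t && (last u t == v)].

(* shortest-path distance delta_G(u,v): least n < #|V| with such a walk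
   (a shortest path has < #|V| edges); #|V| if v is unreachable *)
Definition dist (u v : V) : nat := find (walk_of_len u v) (iota 0 #|V|).

Definition rho_shortest (rho : V -> V -> seq V) : Prop :=
  forall u v, exists p, [/\ rho u v = u :: p, path adj u p, last u p = v
                          & size p = dist u v].

Definition rho_consistent (rho : V -> V -> seq V) : Prop :=
  forall u v (x0 : V) i j, i <= j -> j < size (rho u v) ->
    rho (nth x0 (rho u v) i) (nth x0 (rho u v) j)
    = take (j - i).+1 (drop i (rho u v)).

Definition contiguous_in (p q : seq V) : Prop :=
  forall (x0 : V) i l j, i <= l -> l <= j -> j < size p ->
    nth x0 p i \in q -> nth x0 p j \in q -> nth x0 p l \in q.

Definition rho_intersect_ok (rho : V -> V -> seq V) : Prop :=
  forall u v x y, contiguous_in (rho u v) (rho x y).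

Definition meets_set (p : seq V) (c : {set V}) : bool := has (fun x => x \in c) p.
Definition meets_path (p q : seq V) : bool := has (fun x => x \in q) p.

(* ---- cluster(G,e): outputs of the nondeterministic procedure ----
   cluster_from marked Cs : starting with set [marked] of marked nodes, the
   loop can produce the list of clusters Cs (in order) and then stop. *)
Inductive cluster_from (e : nat) : {set V} -> seq {set V} -> Prop :=
| cl_stop (marked : {set V}) :
    (forall u, u \notin marked ->
       #|[set w | adj u w & w \notin marked]| < e.-1) ->
    cluster_from e marked [::]
| cl_step (marked : {set V}) (u : V) (N : {set V}) rest :
    u \notin marked ->
    N \subset [set w | adj u w & w \notin marked] ->
    #|N| = e.-1 ->
    cluster_from e (marked :|: (u |: N)) rest ->
    cluster_from e marked ((u |: N) :: rest).

Definition is_cluster_output (e : nat) (C : seq {set V}) : Prop :=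
  cluster_from e set0 C.

Definition clean (S : seq (seq V)) (c : {set V}) : bool :=
  ~~ has (fun s => meets_set s c) S.

Definition nb_strips_meeting (S : seq (seq V)) (p : seq V) : nat :=
  size (undup [seq s <- S | meets_path p s]).

Definition nb_clean_meeting (C : seq {set V}) (S : seq (seq V)) (p : seq V) : nat :=
  size (undup [seq c <- C | clean S c && meets_set p c]).

Definition strip_eligible (rho : V -> V -> seq V) (C : seq {set V}) (d m : nat)
    (S : seq (seq V)) (u v : V) : Prop :=
  [/\ dist u v <= d,
      nb_strips_meeting S (rho u v) <= m
    & nb_clean_meeting C S (rho u v) = m].

Inductive strips_from (rho : V -> V -> seq V) (C : seq {set V}) (d m : nat)
  : seq (seq V) -> seq (seq V) -> Prop :=
| st_stop S : (forall u v, ~ strip_eligible rho C d m S u v) ->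
    strips_from rho C d m S S
| st_step S u v S' : strip_eligible rho C d m S u v ->
    strips_from rho C d m (rcons S (rho u v)) S' ->
    strips_from rho C d m S S'.

Definition is_strips_output (rho : V -> V -> seq V) (C : seq {set V}) (d m : nat)
  (S : seq (seq V)) : Prop := strips_from rho C d m [::] S.

End Graph.

(* Main.v *)
Require Import Defs.
From mathcomp Require Import all_boot.
From mathcomp Require Import zify.
Set Implicit Arguments. Unset Strict Implicit. Unset Printing Implicit Defensive.

Lemma cluster_disj (V : finType) (adj : rel V) (e : nat) marked Cs :
  cluster_from adj e marked Cs ->
  (forall c, c \in Cs -> forall x, x \in c -> x \notin marked) /\
  (forall c1 c2, c1 \in Cs -> c2 \in Cs -> forall x, x \in c1 -> x \in c2 -> c1 = c2).
Proof.
elim=> {marked Cs} [marked _ | marked u N rest Hu HN _ _ [IH1 IH2]].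
  by split=> c.
have Hnew : forall x, x \in u |: N -> x \notin marked.
  move=> x; rewrite in_setU1 => /orP [/eqP -> //|xN].
  by move/subsetP: HN => /(_ x xN); rewrite inE => /andP [].
split.
  move=> c; rewrite inE => /orP [/eqP -> //| cr] x xc.
  by have := IH1 c cr x xc; rewrite inE negb_or => /andP [].
move=> c1 c2; rewrite !inE => /orP [/eqP -> | c1r] /orP [/eqP -> | c2r] x x1 x2 //.
- by have := IH1 c2 c2r x x2; rewrite inE x1 orbT.
- by have := IH1 c1 c1r x x1; rewrite inE x2 orbT.
- exact: IH2 c1r c2r x x1 x2.
Qed.

Lemma strips_props (V : finType) (adj : rel V) rho C d m S0 S' :
  strips_from adj rho C d m S0 S' ->
  (forall s, s \in S0 -> exists x y, s = rho x y) ->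
  (forall s, s \in S' -> exists x y, s = rho x y) /\
  (forall x y, ~ strip_eligible adj rho C d m S' x y).
Proof.
elim=> {S0 S'} [S Hst | S u v S' _ _ IH] H; first by split.
apply: IH => s; rewrite mem_rcons inE => /orP [/eqP -> | /H //]; by exists u, v.
Qed.

Lemma count_orle (T : Type) (a b : pred T) s :
  count (fun x => a x || b x) s <= count a s + count b s.
Proof. by elim: s => //= y s IH; case: (a y); case: (b y) => /=; lia. Qed.

Lemma count_or_disj (T : eqType) (a b : pred T) s :
  (forall x, x \in s -> ~~ (a x && b x)) ->
  count (fun x => a x || b x) s = count a s + count b s.
Proof.
elim: s => //= y s IH H.
rewrite IH; last by move=> x xs; apply: H; rewrite inE xs orbT.
have := H y (mem_head _ _).
by case: (a y); case: (b y) => /=; lia.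
Qed.

Lemma find_cross (f : nat -> nat) M n : f 0 < M -> M <= f n ->
  exists2 j, j < n & f j < M <= f j.+1.
Proof.
move=> H0; elim: n => [|n IH] Hn; first by move: H0; rewrite ltnNge Hn.
case: (leqP M (f n)) => h.
  by have [j jn hj] := IH h; exists j => //; lia.
by exists n => //; rewrite h Hn.
Qed.

Lemma count_mem_le1 (V : finType) (s : seq {set V}) x :
  uniq s -> (forall a b, a \in s -> b \in s -> x \in a -> x \in b -> a = b) ->
  count (fun c : {set V} => x \in c) s <= 1.
Proof.
elim: s => //= a s IH /andP [an us] H.
case xa: (x \in a) => /=.
  suff -> : count (fun c : {set V} => x \in c) s = 0 by [].
  apply/eqP; rewrite -leqn0 leqNgt -has_count; apply/negP.
  move=> /hasP [b bs xb]; have bas : b \in a :: s by rewrite inE bs orbT.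
  have eab := H a b (mem_head _ _) bas xa xb.
  by move: an; rewrite eab bs.
apply: IH => // a' b' a's b's; apply: H; by rewrite inE ?a's ?b's orbT.
Qed.

Lemma my_sub_in_count (T : eqType) (a b : pred T) s :
  (forall x, x \in s -> a x -> b x) -> count a s <= count b s.
Proof.
elim: s => //= y s IH H.
have IH' : count a s <= count b s by apply: IH => x xs; apply: H; rewrite inE xs orbT.
case ay: (a y) => /=.
  by rewrite (H y (mem_head _ _) ay) leq_add2l.
exact: leq_trans IH' (leq_addl _ _).
Qed.

Section Main.
Variables (V : finType) (adj : rel V) (rho : V -> V -> seq V).
Variables (C : seq {set V}) (S : seq (seq V)) (d m : nat) (x0 : V).
Hypothesis Hshort : rho_shortest adj rho.
Hypothesis Hint : rho_intersect_ok rho.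
Hypothesis Hdisj : forall c1 c2, c1 \in C -> c2 \in C -> forall x, x \in c1 -> x \in c2 -> c1 = c2.
Hypothesis Hstrip : forall s, s \in S -> exists x y, s = rho x y.
Hypothesis Hstop : forall x y, ~ strip_eligible adj rho C d m S x y.
Hypothesis Hm : 0 < m.

Definition K (q : seq V) := count (fun c => clean S c && meets_set q c) (undup C).
Definition T (q : seq V) := count (fun s => meets_path q s) (undup S).

Lemma KE q : nb_clean_meeting C S q = K q.
Proof. by rewrite /nb_clean_meeting -filter_undup size_filter. Qed.
Lemma TE q : nb_strips_meeting S q = T q.
Proof. by rewrite /nb_strips_meeting -filter_undup size_filter. Qed.

Definition Seg (q : seq V) :=
  forall i j, i < j <= size q -> exists x y, rho x y = take (j - i) (drop i q).

Lemma K_nil : K [::] = 0.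
Proof. by rewrite /K; elim: (undup C) => //= c s ->; rewrite /meets_set /= andbF. Qed.

Lemma K_rcons w x : K (rcons w x) <= K w + 1.
Proof.
rewrite /K.
have -> : count (fun c => clean S c && meets_set (rcons w x) c) (undup C) =
  count (fun c => (clean S c && meets_set w c) || (clean S c && (x \in c))) (undup C).
  by apply: eq_count => c; rewrite /meets_set has_rcons; case: (clean S c); rewrite //= orbC.
apply: leq_trans (count_orle _ _ _) _; rewrite leq_add2l.
apply: leq_trans (count_mem_le1 (x := x) (undup_uniq C) _).
  by apply: sub_count => c /andP [].
by move=> a b; rewrite !mem_undup => aC bC; apply: Hdisj.
Qed.

Lemma K_cat w1 w2 : K (w1 ++ w2) <= K w1 + K w2.
Proof.
rewrite /K.
have -> : count (fun c => clean S c && meets_set (w1 ++ w2) c) (undup C) =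
  count (fun c => (clean S c && meets_set w1 c) || (clean S c && meets_set w2 c)) (undup C).
  by apply: eq_count => c; rewrite /meets_set has_cat andb_orr.
exact: count_orle.
Qed.

Lemma T_cat w1 w2 : (forall s, s \in S -> ~~ (meets_path w1 s && meets_path w2 s)) ->
  T (w1 ++ w2) = T w1 + T w2.
Proof.
move=> H; rewrite /T.
have -> : count (fun s => meets_path (w1 ++ w2) s) (undup S) =
  count (fun s => meets_path w1 s || meets_path w2 s) (undup S).
  by apply: eq_count => s; rewrite /meets_path has_cat.
by apply: count_or_disj => s; rewrite mem_undup; apply: H.
Qed.


Lemma Seg_full q : Seg q -> 0 < size q -> exists x y, rho x y = q.
Proof.
move=> Hq sq; have [x [y H]] := Hq 0 (size q) ltac:(lia).
by exists x, y; rewrite H subn0 drop0 take_size.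
Qed.

Lemma Seg_drop q n : Seg q -> Seg (drop n q).
Proof.
move=> Hq i j; rewrite size_drop => H.
have [x [y E]] := Hq (i + n) (j + n) ltac:(lia).
by exists x, y; rewrite E drop_drop; congr (take _ _); lia.
Qed.

Lemma Seg_take_len q j : Seg q -> j < size q ->
  T (take j.+1 q) <= m -> K (take j.+1 q) = m -> d.+2 <= size (take j.+1 q).
Proof.
move=> Hq jq HT HK.
have [x [y E]] := Hq 0 j.+1 ltac:(lia).
rewrite drop0 subn0 in E.
have := @Hstop x y; rewrite /strip_eligible E TE KE HT HK.
have [p [E' _ _ Hs]] := Hshort x y.
rewrite -E E' /= Hs; case: (leqP (dist adj x y) d) => // _ H; by case: H.
Qed.

Lemma strips_disj q j : Seg q -> j < size q ->
  (exists c, [/\ c \in C, clean S c & nth x0 q j \in c]) ->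
  forall s, s \in S -> ~~ (meets_path (take j.+1 q) s && meets_path (drop j.+1 q) s).
Proof.
move=> Hq jq [c [cC cl xc]] s sS; apply/negP => /andP [h1 h2].
have [x [y Hxy]] := Seg_full Hq ltac:(lia).
have [x' [y' Hs]] := Hstrip sS.
have Hc : contiguous_in q s by rewrite -Hxy Hs; apply: Hint.
move/(has_nthP x0): h1; rewrite size_takel // => -[i1 i1lt].
rewrite nth_take // => Hi1.
move/(has_nthP x0): h2; rewrite size_drop => -[i2 i2lt].
rewrite nth_drop => Hi2.
have Hj : nth x0 q j \in s by apply: (Hc x0 i1 j (j.+1 + i2)) => //; lia.
move: cl; rewrite /clean; apply/negP; rewrite negbK; apply/hasP; exists s => //.
by apply/hasP; exists (nth x0 q j).
Qed.


Lemma main n : forall q, size q <= n -> Seg q ->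
  d.+1 * K q <= m * size q + d.+1 * (T q + m).
Proof.
elim: n => [|n IH] q sq Hq.
  by move: sq; rewrite leqn0 => /nilP ->; rewrite K_nil muln0.
case: (ltnP (K q) m) => Hk.
  have : d.+1 * K q <= d.+1 * m by rewrite leq_mul2l ltnW ?orbT.
  by nia.
have [j jq /andP [h1 h2]] := @find_cross (fun j => K (take j q)) m (size q)
  ltac:(by rewrite /= take0 K_nil) ltac:(by rewrite /= take_size).
move: h1 h2 => /= h1 h2.
have tj := take_nth x0 jq.
have Km : K (take j.+1 q) = m.
  by apply/eqP; rewrite eqn_leq h2 andbT; rewrite tj; apply: leq_trans (K_rcons _ _) _; by rewrite addn1.
have Hclean : exists c, [/\ c \in C, clean S c & nth x0 q j \in c].
  case E: (has (fun c => clean S c && (nth x0 q j \in c)) C).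
    by move/hasP: E => [c cC /andP [cl xc]]; exists c.
  move: h1; rewrite ltnNge => /negP h1; exfalso; apply: h1.
  rewrite -{1}Km tj /K; apply: my_sub_in_count => c; rewrite mem_undup => cC.
  rewrite /meets_set has_rcons => /andP [cl /orP [xc|->]]; last by rewrite cl.
  by move/negP: E; case; apply/hasP; exists c => //; rewrite cl.
have Eq : q = take j.+1 q ++ drop j.+1 q by rewrite cat_take_drop.
have HT := T_cat (strips_disj Hq jq Hclean).
rewrite -Eq in HT.
have HK := K_cat (take j.+1 q) (drop j.+1 q); rewrite -Eq Km in HK.
have Hsz : size q = size (take j.+1 q) + size (drop j.+1 q) by rewrite {1}Eq size_cat.
have IHr := IH (drop j.+1 q) ltac:(rewrite size_drop; lia) (@Seg_drop q j.+1 Hq).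
case: (leqP (T (take j.+1 q)) m) => HTs.
  have Hl := Seg_take_len Hq jq HTs Km.
  rewrite HT Hsz; nia.
rewrite HT Hsz; nia.
Qed.

End Main.

Theorem lemma3 :
  exists c N : nat, 0 < c /\
  forall (V : finType) (adj : rel V),
    symmetric adj -> irreflexive adj ->
  forall rho : V -> V -> seq V,
    rho_shortest adj rho -> rho_consistent rho -> rho_intersect_ok rho ->
  forall (e : nat) (C : seq {set V}), 0 < e -> is_cluster_output adj e C ->
  forall (d m : nat), 0 < d -> 0 < m ->
  forall S : seq (seq V), is_strips_output adj rho C d m S ->
  forall (u v : V) (k : nat),
    nb_clean_meeting C S (rho u v) = k ->
    2 * nb_strips_meeting S (rho u v) < k ->
    N * m <= k ->
    k * d <= c * m * dist adj u v.
Proof.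
exists 4, 4; split=> //.
move=> V adj _ _ rho Hsh Hcons Hint e C _ HC d m _ Hm S HS u v k Hk H2 HN.
have [_ Hdisj] := cluster_disj HC.
have [Hstrip Hstop] := strips_props HS (fun s (h : s \in [::]) => match notF h with end).
have Hseg : Seg rho (rho u v).
  move=> i j /andP [ij js]; exists (nth u (rho u v) i), (nth u (rho u v) j.-1).
  rewrite Hcons; [congr (take _ _) | |]; lia.
have Hm' := main u Hsh Hint Hdisj Hstrip Hstop Hm (leqnn _) Hseg.
rewrite KE in Hk; rewrite TE in H2; rewrite Hk in Hm'.
have [p [E _ _ Hs]] := Hsh u v.
have Hsz : size (rho u v) = (dist adj u v).+1 by rewrite E /= Hs.
rewrite Hsz in Hm'.
set T0 := T S (rho u v) in H2 Hm'.
set L := dist adj u v in Hm' *.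
have A : d.+1 * (2 * T0) <= d.+1 * (k - 1) by rewrite leq_mul2l; apply/orP; right; lia.
have B : d * (4 * m) <= d * k by rewrite leq_mul2l HN orbT.
have k1 : 1 <= k by lia.
have E1 : d.+1 * k = d * k + k by nia.
have E2 : m * L.+1 = m * L + m by nia.
have E3 : d.+1 * (T0 + m) = d * T0 + T0 + d * m + m by nia.
have E4 : d.+1 * (2 * T0) = 2 * (d * T0) + 2 * T0 by nia.
have E5 : d.+1 * (k - 1) = d * k + k - d - 1 by nia.
have E6 : d * (4 * m) = 4 * (d * m) by nia.
have E7 : 4 * m * L = 4 * (m * L) by nia.
have E8 : k * d = d * k by nia.
rewrite E1 E2 E3 in Hm'; rewrite E4 E5 in A; rewrite E6 in B; rewrite E7 E8.
move: (d * k) (m * L) (d * T0) (d * m) Hm' A B => a b c f.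
lia.
Qed.
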